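(* Let $x_1<x_2<\cdots<x_n$ be a partition of $[x_1,x_n]$, with $h_i=x_{i+1}-x_i$ ($1\le i\le n-1$) and $\hat h=\max_i h_i$. Let $f\in C^4([x_1,x_n])$ and $L>0$ with $|f^{(4)}(x)|\le L$ for all $x\in[x_1,x_n]$, and assume there is $K>0$ with $\hat h/h_i\le K$ for all $i=1,\dots,n-1$. Write $f_i=f(x_i)$, $f'_i=f'(x_i)$, $m_i=(f_{i+1}-f_i)/h_i$, $\lambda_i=\frac{h_{i+1}}{h_i+h_{i+1}}$, $\mu_i=\frac{h_i}{h_i+h_{i+1}}$. Let $\dot f_1=f'_1$, $\dot f_n=f'_n$ and let $\dot f_2,\dots,\dot f_{n-1}$ be the solution of $$\lambda_{i-1}\dot f_{i-1}+2\dot f_i+\mu_{i-1}\dot f_{i+1}=3(\lambda_{i-1}m_{i-1}+\mu_{i-1}m_i),\qquad i=2,\dots,n-1.$$ Fix an index $i_0$ with $1<i_0<n$, constants $p_{i_0},T>0$, and a number $\tilde f_{i_0}$ with $|f'_{i_0}-\tilde f_{i_0}|=T\hat h^{p_{i_0}}$. Define the modified values $\dot F_{i_0}$ by $(\dot F_{i_0})_{i_0}=\tilde f_{i_0}$ and $(\dot F_{i_0})_i=\dot f_i$ for $i\ne i_0$. Then $$|(\dot F_{i_0})_i-f'_i|=\begin{cases}O(\hat h^{p_{i_0}}),& i=i_0,\\ O(\hat h^3),& i\ne i_0.\end{cases}$$ Moreover, the piecewise cubic Hermite interpolant $P$ built with the derivative values $\dot F_{i_0}$ (on each $[x_i,x_{i+1}]$,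 $P$ is the cubic with $P(x_i)=f_i$, $P(x_{i+1})=f_{i+1}$, $P'(x_i)=(\dot F_{i_0})_i$, $P'(x_{i+1})=(\dot F_{i_0})_{i+1}$) has $C^2$ regularity on $[x_1,x_n]$ except at the points $x_{i_0-1},x_{i_0},x_{i_0+1}$.
   Context: $O(\hat h^q)$ denotes a quantity bounded in absolute value by $C\hat h^q$ with $C$ independent of the partition (it may depend on $f$, $L$, $K$, $T$). *)

(* Defs.v *)
From Stdlib Require Import Reals Lra Lia.
From Coquelicot Require Import Coquelicot.
Open Scope R_scope.

(* Nodes are indexed 1..n as in the paper: x : nat -> R, x 1 < ... < x n. *)

Definition hstep (x : nat -> R) (i : nat) : R := x (S i) - x i.

Fixpoint hmax (x : nat -> R) (k : nat) : R :=
  match k with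
  | O => 0
  | S k' => Rmax (hmax x k') (hstep x (S k'))
  end.

Definition hhat (x : nat -> R) (n : nat) : R := hmax x (n - 1).

Definition slope (f : R -> R) (x : nat -> R) (i : nat) : R :=
  (f (x (S i)) - f (x i)) / hstep x i.

Definition lam (x : nat -> R) (i : nat) : R :=
  hstep x (S i) / (hstep x i + hstep x (S i)).
Definition mu (x : nat -> R) (i : nat) : R :=
  hstep x i / (hstep x i + hstep x (S i)).

Definition spline_derivs (f : R -> R) (x : nat -> R) (n : nat) (dd : nat -> R) : Prop :=
  dd 1%nat = Derive f (x 1%nat) /\ dd n = Derive f (x n) /\
  forall i : nat, (2 <= i <= n - 1)%nat ->
    lam x (i - 1) * dd (i - 1)%nat + 2 * dd i + mu x (i - 1) * dd (S i)
    = 3 * (lam x (i - 1) * slope f x (i - 1) + mu x (i - 1) * slope f x i).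

Definition cubic (c0 c1 c2 c3 xi : R) (X : R) : R :=
  c0 + c1 * (X - xi) + c2 * (X - xi) ^ 2 + c3 * (X - xi) ^ 3.

Definition pw_hermite (x : nat -> R) (n : nat) (y d : nat -> R) (P : R -> R) : Prop :=
  forall i : nat, (1 <= i <= n - 1)%nat ->
    exists c0 c1 c2 c3 : R,
      let q := cubic c0 c1 c2 c3 (x i) in
      (forall X, x i <= X <= x (S i) -> P X = q X) /\
      q (x i) = y i /\ q (x (S i)) = y (S i) /\
      Derive q (x i) = d i /\ Derive q (x (S i)) = d (S i).

Definition C2_at (P : R -> R) (x0 : R) : Prop :=
  exists delta : R, 0 < delta /\
    (forall y, Rabs (y - x0) < delta -> forall k, (k <= 2)%nat -> ex_derive_n P k y) /\
    continuous (Derive_n P 2) x0.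

Definition C4_on (f : R -> R) (a b : R) : Prop :=
  exists delta : R, 0 < delta /\
    forall y, a - delta < y < b + delta ->
      (forall k, (k <= 4)%nat -> ex_derive_n f k y) /\
      continuous (Derive_n f 4) y.

(* Main.v *)
Require Import Defs.
From Stdlib Require Import Reals Lra Lia.
From Coquelicot Require Import Coquelicot.
Open Scope R_scope.

Lemma d_abs1 c y : is_derive (fun y => (y-c)*Rabs(y-c)) y (2*Rabs(y-c)).
Proof.
  destruct (Rtotal_order y c) as [Hl|[He|Hg]].
  - rewrite Rabs_left by lra.
    apply is_derive_ext_loc with (f := fun t => - (t-c)^2).
    + apply locally_interval with (a := m_infty) (b := Finite c); simpl; auto.
      intros t _ Ht. rewrite Rabs_left by lra. ring.
    + auto_derive; auto. ring.
  - subst y. apply is_derive_Reals. intros eps Heps.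
    exists (mkposreal eps Heps). intros h Hh Hlt. simpl in Hlt.
    replace (c+h-c) with h by ring. replace (c-c) with 0 by ring. rewrite Rabs_R0.
    replace ((h * Rabs h - 0 * 0) / h - 2 * 0) with (Rabs h) by (field; auto).
    rewrite Rabs_Rabsolu; auto.
  - rewrite Rabs_pos_eq by lra.
    apply is_derive_ext_loc with (f := fun t => (t-c)^2).
    + apply locally_interval with (a := Finite c) (b := p_infty); simpl; auto.
      intros t Ht _. rewrite Rabs_pos_eq by lra. ring.
    + auto_derive; auto. ring.
Qed.

Lemma d_abs2 c y : is_derive (fun y => (y-c)^2*Rabs(y-c)) y (3*((y-c)*Rabs(y-c))).
Proof.
  assert (H1 : is_derive (fun y => y - c) y 1) by (auto_derive; auto).
  pose proof (is_derive_mult _ _ y _ _ H1 (d_abs1 c y) ltac:(intros; apply Rmult_comm)) as H.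
  simpl in H. unfold mult, plus in H; simpl in H.
  replace (3 * ((y - c) * Rabs (y - c))) with (1 * ((y - c) * Rabs (y - c)) + (y - c) * (2 * Rabs (y - c))) by ring.
  apply is_derive_ext with (2 := H). intros t; simpl; ring.
Qed.

Definition Gf (xi c c0 c1 c2 c3 k1 k2 : R) (y:R) :=
  cubic c0 c1 c2 c3 xi y + k1*(y-c)^3 + k2*((y-c)^2*Rabs(y-c)).
Definition G1 (xi c c0 c1 c2 c3 k1 k2 : R) (y:R) :=
  (c1 + 2*c2*(y-xi) + 3*c3*(y-xi)^2 + 3*k1*(y-c)^2) + k2*(3*((y-c)*Rabs(y-c))).
Definition G2 (xi c c0 c1 c2 c3 k1 k2 : R) (y:R) :=
  (2*c2 + 6*c3*(y-xi) + 6*k1*(y-c)) + k2*(3*(2*Rabs(y-c))).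

Lemma dG xi c c0 c1 c2 c3 k1 k2 y :
  is_derive (Gf xi c c0 c1 c2 c3 k1 k2) y (G1 xi c c0 c1 c2 c3 k1 k2 y).
Proof.
  unfold Gf, G1.
  apply (is_derive_plus (K:=R_AbsRing) (V:=R_NormedModule)).
  - unfold cubic. auto_derive; auto. ring.
  - apply is_derive_scal, d_abs2.
Qed.

Lemma dG1 xi c c0 c1 c2 c3 k1 k2 y :
  is_derive (G1 xi c c0 c1 c2 c3 k1 k2) y (G2 xi c c0 c1 c2 c3 k1 k2 y).
Proof.
  unfold G1, G2.
  apply (is_derive_plus (K:=R_AbsRing) (V:=R_NormedModule)).
  - auto_derive; auto. ring.
  - apply is_derive_scal, is_derive_scal, d_abs1.
Qed.

Lemma cG2 xi c c0 c1 c2 c3 k1 k2 y :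
  continuous (G2 xi c c0 c1 c2 c3 k1 k2) y.
Proof.
  unfold G2.
  apply (continuous_plus (U:=R_UniformSpace) (V:=R_NormedModule)).
  - apply (ex_derive_continuous (K:=R_AbsRing) (V:=R_NormedModule)). auto_derive; auto.
  - apply (continuous_mult (fun _ => k2)); [apply continuous_const|].
    apply (continuous_mult (fun _ => 3)); [apply continuous_const|].
    apply (continuous_mult (fun _ => 2)); [apply continuous_const|].
    apply continuous_Rabs_comp.
    apply (ex_derive_continuous (K:=R_AbsRing) (V:=R_NormedModule)). auto_derive; auto.
Qed.

Lemma C2_from_G P t d xi c c0 c1 c2 c3 k1 k2 : 0 < d ->
  (forall y, Rabs (y - t) < d -> P y = Gf xi c c0 c1 c2 c3 k1 k2 y) -> C2_at P t.
Proof.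
  intros Hd HP.
  set (g := Gf xi c c0 c1 c2 c3 k1 k2).
  assert (Hloc : forall y, Rabs (y - t) < d -> locally y (fun s => g s = P s)).
  { intros y Hy. apply locally_interval with (a := Finite (t - d)) (b := Finite (t + d));
      simpl; try (apply Rabs_def2 in Hy; lra).
    intros s H1 H2. symmetry. apply HP. apply Rabs_def1; lra. }
  assert (E1 : forall s, Derive_n g 1 s = G1 xi c c0 c1 c2 c3 k1 k2 s).
  { intros s. simpl. apply is_derive_unique, dG. }
  assert (E2 : forall s, Derive_n g 2 s = G2 xi c c0 c1 c2 c3 k1 k2 s).
  { intros s. change (Derive (Derive_n g 1) s = G2 xi c c0 c1 c2 c3 k1 k2 s).
    rewrite (Derive_ext _ _ _ E1). apply is_derive_unique, dG1. }
  exists d. split; [exact Hd|split].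
  - intros y Hy k Hk. apply ex_derive_n_ext_loc with (f := g); [apply Hloc; auto|].
    destruct k as [|[|[|k]]]; try lia.
    + exact I.
    + simpl. eexists. apply dG.
    + change (ex_derive (Derive_n g 1) y).
      apply ex_derive_ext with (f := G1 xi c c0 c1 c2 c3 k1 k2).
      { intros s; now rewrite E1. }
      eexists. apply dG1.
  - apply continuous_ext_loc with (g := G2 xi c c0 c1 c2 c3 k1 k2); [|apply cG2].
    apply locally_interval with (a := Finite (t - d)) (b := Finite (t + d)); simpl; try lra.
    intros s H1 H2. rewrite <- E2. change (Derive_n g 2 s = Derive_n P 2 s). apply Derive_n_ext_loc. apply Hloc. apply Rabs_def1; lra.
Qed.

Lemma Dcubic c0 c1 c2 c3 xi X :
  Derive (cubic c0 c1 c2 c3 xi) X = c1 + 2*c2*(X-xi) + 3*c3*(X-xi)^2.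
Proof. apply is_derive_unique. unfold cubic. auto_derive; auto. ring. Qed.

Lemma interior_C2 P xa xb c0 c1 c2 c3 t : xa < t < xb ->
  (forall X, xa <= X <= xb -> P X = cubic c0 c1 c2 c3 xa X) -> C2_at P t.
Proof.
  intros Ht HP.
  apply C2_from_G with (d := Rmin (t - xa) (xb - t)) (xi := xa) (c := 0)
    (c0:=c0) (c1:=c1) (c2:=c2) (c3:=c3) (k1 := 0) (k2 := 0).
  - apply Rmin_glb_lt; lra.
  - intros y Hy. apply Rabs_def2 in Hy.
    pose proof (Rmin_l (t - xa) (xb - t)). pose proof (Rmin_r (t - xa) (xb - t)).
    rewrite HP by lra. unfold Gf. ring.
Qed.

Lemma node_glue (P: R->R) (xa xb xc ya yb yc sa sb sc : R) c0 c1 c2 c3 d0 d1 d2 d3 :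
 xa < xb -> xb < xc ->
 (forall X, xa <= X <= xb -> P X = cubic c0 c1 c2 c3 xa X) ->
 cubic c0 c1 c2 c3 xa xa = ya -> cubic c0 c1 c2 c3 xa xb = yb ->
 Derive (cubic c0 c1 c2 c3 xa) xa = sa -> Derive (cubic c0 c1 c2 c3 xa) xb = sb ->
 (forall X, xb <= X <= xc -> P X = cubic d0 d1 d2 d3 xb X) ->
 cubic d0 d1 d2 d3 xb xb = yb -> cubic d0 d1 d2 d3 xb xc = yc ->
 Derive (cubic d0 d1 d2 d3 xb) xb = sb -> Derive (cubic d0 d1 d2 d3 xb) xc = sc ->
 (xc-xb)/((xb-xa)+(xc-xb)) * sa + 2*sb + (xb-xa)/((xb-xa)+(xc-xb))*sc
   = 3*((xc-xb)/((xb-xa)+(xc-xb)) * ((yb-ya)/(xb-xa))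
        + (xb-xa)/((xb-xa)+(xc-xb))*((yc-yb)/(xc-xb))) ->
 C2_at P xb.
Proof.
  intros Hab Hbc HP1 Ea Eb Dsa Dsb HP2 Fb Fc Fsb Fsc Hsp.
  rewrite !Dcubic in Dsa, Dsb, Fsb, Fsc.
  unfold cubic in Ea, Eb, Fb, Fc.
  set (h := xb - xa) in *. set (g := xc - xb) in *.
  replace (xa - xa) with 0 in * by ring. replace (xb - xb) with 0 in * by ring.
  assert (Hh : 0 < h) by (unfold h; lra). assert (Hg : 0 < g) by (unfold g; lra).
  assert (Exa : xa = xb - h) by (unfold h; ring). assert (Exc : xc = xb + g) by (unfold g; ring).
  clearbody h g. subst xa xc.
  assert (Hd0 : d0 = c0 + c1*h + c2*h^2 + c3*h^3) by (rewrite <- Eb in Fb; rewrite <- Fb; ring).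
  assert (Hd1 : d1 = c1 + 2*c2*h + 3*c3*h^2) by (rewrite <- Dsb in Fsb; rewrite <- Fsb; ring).
  assert (Hm1 : (yb - ya)/h = c1 + c2*h + c3*h^2).
  { rewrite <- Eb, <- Ea. field. lra. }
  assert (Hm2 : (yc - yb)/g = d1 + d2*g + d3*g^2).
  { rewrite <- Fc, <- Fb. field. lra. }
  rewrite Hm1, Hm2 in Hsp.
  rewrite <- Dsa, <- Fsb, <- Fsc in Hsp.
  assert (Key : g*h*(c2 + 3*c3*h - d2) / (h+g) = 0).
  { refine (eq_trans _ (Rminus_diag_eq _ _ Hsp)). rewrite Hd1. field. lra. }
  assert (Hd2 : d2 = c2 + 3*c3*h).
  { assert (g*h*(c2 + 3*c3*h - d2) = 0).
    { apply (Rmult_eq_reg_r (/(h+g))). rewrite Rmult_0_l. exact Key.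
      apply Rinv_neq_0_compat. lra. }
    assert (g*h <> 0) by (apply Rmult_integral_contrapositive; lra).
    destruct (Rmult_integral _ _ H); [contradiction|lra]. }
  apply C2_from_G with (d := Rmin h g) (xi := xb - h) (c := xb)
    (c0:=c0) (c1:=c1) (c2:=c2) (c3:=c3) (k1 := (d3-c3)/2) (k2 := (d3-c3)/2).
  - apply Rmin_glb_lt; lra.
  - intros y Hy. apply Rabs_def2 in Hy.
    pose proof (Rmin_l h g). pose proof (Rmin_r h g).
    unfold Gf.
    destruct (Rle_lt_dec y xb).
    + rewrite HP1 by lra.
      rewrite Rabs_left1 by lra. ring.
    + rewrite HP2 by lra.
      rewrite Rabs_pos_eq by lra. unfold cubic.
      rewrite Hd0, Hd1, Hd2. replace (y - (xb - h)) with ((y - xb) + h) by ring.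
      field.
Qed.

Lemma locate x n t : (1 <= n)%nat -> (forall i, (1 <= i <= n - 1)%nat -> x i < x (S i)) ->
  x 1%nat <= t < x n -> exists j, (1 <= j <= n - 1)%nat /\ x j <= t < x (S j).
Proof.
  intros Hn1 Hinc Ht.
  assert (forall m, (1 <= m <= n)%nat -> t < x m -> exists j, (1 <= j)%nat /\ (j < m)%nat /\ x j <= t < x (S j)).
  { induction m as [|m IH]; intros Hm Htm.
    - lia.
    - destruct m as [|m'].
      + lra.
      + destruct (Rlt_le_dec t (x (S m'))) as [Hl|Hl].
        * destruct (IH ltac:(lia) Hl) as [j [H1 [H2 H3]]]. exists j. repeat split; try lia; lra.
        * exists (S m'). repeat split; try lia; lra. }
  destruct (H n ltac:(lia) (proj2 Ht)) as [j [H1 [H2 H3]]].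
  exists j. split; [lia|exact H3].
Qed.

Lemma C2_main f x n F P t : (2 <= n)%nat ->
  (forall i, (1 <= i <= n - 1)%nat -> x i < x (S i)) ->
  pw_hermite x n (fun i => f (x i)) F P -> x 1%nat < t < x n ->
  (forall j, (2 <= j <= n - 1)%nat -> t = x j ->
     lam x (j - 1) * F (j - 1)%nat + 2 * F j + mu x (j - 1) * F (S j)
     = 3 * (lam x (j - 1) * slope f x (j - 1) + mu x (j - 1) * slope f x j)) ->
  C2_at P t.
Proof.
  intros Hn Hinc Hpw Ht Hsp.
  destruct (locate x n t ltac:(lia) Hinc ltac:(lra)) as [j [Hj [Ht1 Ht2]]].
  destruct Ht1 as [Hlt|Heq].
  - destruct (Hpw j Hj) as [c0 [c1 [c2 [c3 [HP _]]]]].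
    exact (interior_C2 P (x j) (x (S j)) c0 c1 c2 c3 t ltac:(lra) HP).
  - subst t. destruct j as [|k]; [lia|].
    destruct k as [|k]; [lra|].
    pose proof (Hsp (S (S k)) ltac:(lia) eq_refl) as Hs.
    replace (S (S k) - 1)%nat with (S k) in Hs by lia.
    destruct (Hpw (S k) ltac:(lia)) as [c0 [c1 [c2 [c3 [HP1 [Ea [Eb [Da Db]]]]]]]].
    destruct (Hpw (S (S k)) Hj) as [d0 [d1 [d2 [d3 [HP2 [Fa [Fb [Ga Gb]]]]]]]].
    assert (H1 : x (S k) < x (S (S k))) by (apply Hinc; lia).
    assert (H2 : x (S (S k)) < x (S (S (S k)))) by (apply Hinc; lia).
    unfold lam, mu, slope, hstep in Hs.
    exact (node_glue P _ _ _ _ _ _ _ _ _ c0 c1 c2 c3 d0 d1 d2 d3 H1 H2 HP1 Ea Eb Da Db HP2 Fa Fb Ga Gb Hs).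
Qed.

Lemma rem_bound (y c D M : R) N : Rabs D <= M ->
  Rabs ((y - c) ^ S N / INR (Factorial.fact (S N)) * D) <= M * Rabs (y - c) ^ S N / INR (Factorial.fact (S N)).
Proof.
  intros HD. pose proof (INR_fact_lt_0 (S N)) as Hf.
  rewrite Rabs_mult. unfold Rdiv. rewrite Rabs_mult, <- RPow_abs.
  rewrite (Rabs_pos_eq (/ _)) by (left; apply Rinv_0_lt_compat; lra).
  assert (0 <= Rabs (y - c) ^ S N * / INR (Factorial.fact (S N))).
  { apply Rmult_le_pos; [apply pow_le, Rabs_pos| left; apply Rinv_0_lt_compat; lra]. }
  replace (M * Rabs (y - c) ^ S N * / INR (Factorial.fact (S N))) with
    (Rabs (y - c) ^ S N * / INR (Factorial.fact (S N)) * M) by ring.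
  apply Rmult_le_compat_l; auto.
Qed.

Lemma taylor_bound (phi : R -> R) N (al be a b M c y : R) :
  al < a -> b < be ->
  (forall t, al < t < be -> forall k, (k <= S N)%nat -> ex_derive_n phi k t) ->
  (forall t, a <= t <= b -> Rabs (Derive_n phi (S N) t) <= M) ->
  a <= c <= b -> a <= y <= b ->
  Rabs (phi y - sum_f_R0 (fun m => (y - c) ^ m / INR (Factorial.fact m) * Derive_n phi m c) N)
    <= M * Rabs (y - c) ^ S N / INR (Factorial.fact (S N)).
Proof.
  intros Hal Hbe Hd HM Hc Hy.
  destruct (Rtotal_order c y) as [Hlt|[Heq|Hgt]].
  - destruct (Taylor_Lagrange phi N c y Hlt) as [z [Hz Eq]].
    { intros t Ht k Hk. apply Hd; [lra|lia]. }
    rewrite Eq. match goal with |- Rabs (?S + ?Rm - ?S) <= _ => replace (S + Rm - S) with Rm by ring end.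
    apply rem_bound, HM. lra.
  - subst y. replace (c - c) with 0 by ring.
    assert (Hs : forall K, sum_f_R0 (fun m => 0 ^ m / INR (Factorial.fact m) * Derive_n phi m c) K = phi c).
    { induction K as [|K IH]; simpl.
      - field.
      - rewrite IH. unfold Rdiv. ring. }
    rewrite Hs. replace (phi c - phi c) with 0 by ring. rewrite Rabs_R0. idtac.
    simpl pow. rewrite Rmult_0_l, Rmult_0_r. unfold Rdiv. rewrite Rmult_0_l. lra.
  - set (g := fun s => phi (- s)).
    assert (Hg : forall t, - be < t < - al -> forall k, (k <= S N)%nat ->
               is_derive_n g k t ((-1) ^ k * Derive_n phi k (- t))).
    { intros t Ht k Hk. apply is_derive_n_comp_opp.
      - apply locally_interval with (a := Finite al) (b := Finite be); simpl; try lra.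
        intros s H1 H2 k' Hk'. apply Hd; [lra|lia].
      - apply Derive_n_correct. apply Hd; [lra|lia]. }
    assert (Hge : forall t, - c <= t <= - y -> forall k, (k <= S N)%nat -> ex_derive_n g k t).
    { intros t Ht k Hk. destruct k as [|k]; [exact I|].
      exists ((-1) ^ S k * Derive_n phi (S k) (- t)). apply (Hg t ltac:(lra) (S k) Hk). }
    destruct (Taylor_Lagrange g N (- c) (- y) ltac:(lra) Hge) as [z [Hz Eq]].
    unfold g at 1 in Eq. rewrite Ropp_involutive in Eq. rewrite Eq.
    assert (HD : forall k, (k <= S N)%nat -> forall t, - be < t < - al ->
               Derive_n g k t = (-1) ^ k * Derive_n phi k (- t)).
    { intros k Hk t Ht. apply is_derive_n_unique, Hg; auto. }
    rewrite (sum_eq _ (fun m => (y - c) ^ m / INR (Factorial.fact m) * Derive_n phi m c)).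
    2:{ intros i Hi. rewrite HD by (try lia; lra). rewrite Ropp_involutive.
        replace (- y - - c) with ((-1) * (y - c)) by ring. rewrite Rpow_mult_distr.
        replace ((-1) ^ i * (y - c) ^ i / INR (Factorial.fact i) * ((-1) ^ i * Derive_n phi i c))
          with (((-1) ^ i * (-1) ^ i) * ((y - c) ^ i / INR (Factorial.fact i) * Derive_n phi i c)) by (field; apply INR_fact_neq_0).
        rewrite <- Rpow_mult_distr. replace (-1 * -1) with 1 by ring. rewrite pow1. ring. }
    rewrite HD by (try lia; lra).
    match goal with |- Rabs (?S + ?Rm - ?S) <= _ => replace (S + Rm - S) with Rm by ring end.
    assert (Hp : forall m, (- y - - c) ^ m * (-1) ^ m = (y - c) ^ m).
    { intros m. replace (- y - - c) with ((-1) * (y - c)) by ring. rewrite Rpow_mult_distr.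
      replace ((-1) ^ m * (y - c) ^ m * (-1) ^ m) with (((-1) ^ m * (-1) ^ m) * (y - c) ^ m) by ring.
      rewrite <- Rpow_mult_distr. replace (-1 * -1) with 1 by ring. rewrite pow1. ring. }
    replace ((- y - - c) ^ S N / INR (Factorial.fact (S N)) * ((-1) ^ S N * Derive_n phi (S N) (- z)))
      with (((- y - - c) ^ S N * (-1) ^ S N) / INR (Factorial.fact (S N)) * Derive_n phi (S N) (- z))
      by (field; apply INR_fact_neq_0).
    rewrite Hp. apply rem_bound, HM. lra.
Qed.

Lemma tay4 (f : R -> R) a b L c y : C4_on f a b ->
  (forall t, a <= t <= b -> Rabs (Derive_n f 4 t) <= L) ->
  a <= c <= b -> a <= y <= b ->
  Rabs (f y - (f c + (y - c) * Derive_n f 1 c + (y - c)^2/2 * Derive_n f 2 c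
               + (y - c)^3/6 * Derive_n f 3 c)) <= L * Rabs (y - c) ^ 4 / 24.
Proof.
  intros [d [Hd HC]] HL Hc Hy.
  pose proof (taylor_bound f 3 (a - d) (b + d) a b L c y ltac:(lra) ltac:(lra)) as T.
  assert (E1 : sum_f_R0 (fun m => (y - c) ^ m / INR (Factorial.fact m) * Derive_n f m c) 3
    = f c + (y - c) * Derive_n f 1 c + (y - c)^2/2 * Derive_n f 2 c + (y - c)^3/6 * Derive_n f 3 c).
  { simpl. field. }
  assert (E2 : INR (Factorial.fact 4) = 24) by (simpl; ring).
  rewrite E1, E2 in T. apply T; auto.
  intros t Ht k Hk. apply (HC t Ht); lia.
Qed.

Lemma tay3 (f : R -> R) a b L c y : C4_on f a b ->
  (forall t, a <= t <= b -> Rabs (Derive_n f 4 t) <= L) ->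
  a <= c <= b -> a <= y <= b ->
  Rabs (Derive f y - (Derive_n f 1 c + (y - c) * Derive_n f 2 c
               + (y - c)^2/2 * Derive_n f 3 c)) <= L * Rabs (y - c) ^ 3 / 6.
Proof.
  intros [d [Hd HC]] HL Hc Hy.
  assert (Hcomp : forall m s, Derive_n (Derive f) m s = Derive_n f (S m) s).
  { intros m s. rewrite <- Nat.add_1_r. rewrite <- Derive_n_comp. reflexivity. }
  pose proof (taylor_bound (Derive f) 2 (a - d) (b + d) a b L c y ltac:(lra) ltac:(lra)) as T.
  assert (E1 : sum_f_R0 (fun m => (y - c) ^ m / INR (Factorial.fact m) * Derive_n (Derive f) m c) 2
    = Derive_n f 1 c + (y - c) * Derive_n f 2 c + (y - c)^2/2 * Derive_n f 3 c).
  { rewrite (sum_eq _ (fun m => (y - c) ^ m / INR (Factorial.fact m) * Derive_n f (S m) c)) by (intros; now rewrite Hcomp). simpl. field. }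
  assert (E2 : INR (Factorial.fact 3) = 6) by (simpl; ring).
  rewrite E1, E2 in T. apply T; auto.
  - intros t Ht k Hk. destruct k as [|k]; [exact I|].
    simpl. apply ex_derive_ext with (f := Derive_n f (S k)).
    { intros s. now rewrite Hcomp. }
    apply (proj1 (HC t ltac:(lra)) (S (S k))). lia.
Qed.

Lemma abs_inv a b : Rabs a <= b -> - b <= a <= b.
Proof. intros H. pose proof (Rle_abs a). pose proof (Rle_abs (- a)). rewrite Rabs_Ropp in H1. lra. Qed.

Lemma rbound L H h g F0 F1 F2 P0 P1 P2 D1 D2 D3 :
 0 < h -> 0 < g -> h <= H -> g <= H -> 0 <= L ->
 Rabs (F2 - (F1 + g*D1 + g^2/2*D2 + g^3/6*D3)) <= L * Rabs g ^4/24 ->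
 Rabs (F0 - (F1 + (-h)*D1 + (-h)^2/2*D2 + (-h)^3/6*D3)) <= L * Rabs (-h) ^4/24 ->
 Rabs (P2 - (D1 + g*D2 + g^2/2*D3)) <= L*Rabs g^3/6 ->
 Rabs (P0 - (D1 + (-h)*D2 + (-h)^2/2*D3)) <= L*Rabs (-h)^3/6 ->
 P1 = D1 ->
 Rabs (3*(g/(h+g)*((F1-F0)/h) + h/(h+g)*((F2-F1)/g)) - (g/(h+g) * P0 + 2*P1 + h/(h+g)*P2)) <= L*H^3.
Proof.
  intros Hh Hg HhH HgH HL B1 B3 B2 B4 HP1.
  rewrite Rabs_Ropp, (Rabs_pos_eq h), (Rabs_pos_eq g) in * by lra.
  set (E1 := F2 - (F1 + g*D1 + g^2/2*D2 + g^3/6*D3)) in *.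
  set (E3 := F0 - (F1 + (-h)*D1 + (-h)^2/2*D2 + (-h)^3/6*D3)) in *.
  set (E2 := P2 - (D1 + g*D2 + g^2/2*D3)) in *.
  set (E4 := P0 - (D1 + (-h)*D2 + (-h)^2/2*D3)) in *.
  assert (Hr : 3*(g/(h+g)*((F1-F0)/h) + h/(h+g)*((F2-F1)/g)) - (g/(h+g) * P0 + 2*P1 + h/(h+g)*P2)
     = g/(h+g) * (-3*(E3 * /h) - E4) + h/(h+g) * (3*(E1 * /g) - E2)).
  { unfold E1, E2, E3, E4. rewrite HP1. field. lra. }
  rewrite Hr.
  apply abs_inv in B1. apply abs_inv in B2. apply abs_inv in B3. apply abs_inv in B4.
  assert (h^3 <= H^3) by (apply pow_incr; lra).
  assert (g^3 <= H^3) by (apply pow_incr; lra).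
  assert (Q3 : - (L*h^3/24) <= E3 * /h <= L*h^3/24).
  { assert (0 <= /h) by (left; apply Rinv_0_lt_compat; lra).
    replace (L*h^3/24) with ((L*h^4/24) * /h) by (field; lra).
    replace (- ((L*h^4/24) * /h)) with ((- (L*h^4/24)) * /h) by ring.
    split; apply Rmult_le_compat_r; lra. }
  assert (Q1 : - (L*g^3/24) <= E1 * /g <= L*g^3/24).
  { assert (0 <= /g) by (left; apply Rinv_0_lt_compat; lra).
    replace (L*g^3/24) with ((L*g^4/24) * /g) by (field; lra).
    replace (- ((L*g^4/24) * /g)) with ((- (L*g^4/24)) * /g) by ring.
    split; apply Rmult_le_compat_r; lra. }
  assert (LH : 0 <= L * h^3) by (apply Rmult_le_pos; [lra| apply pow_le; lra]).
  assert (LG : 0 <= L * g^3) by (apply Rmult_le_pos; [lra| apply pow_le; lra]).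
  assert (LHh : L * h^3 <= L * H^3) by (apply Rmult_le_compat_l; lra).
  assert (LHg : L * g^3 <= L * H^3) by (apply Rmult_le_compat_l; lra).
  set (X := -3*(E3 * /h) - E4). set (Y := 3*(E1 * /g) - E2).
  assert (BX : - (L*H^3) <= X <= L*H^3) by (unfold X; lra).
  assert (BY : - (L*H^3) <= Y <= L*H^3) by (unfold Y; lra).
  set (la := g/(h+g)). set (m := h/(h+g)).
  assert (Hla : 0 <= la) by (unfold la; apply Rlt_le, Rdiv_lt_0_compat; lra).
  assert (Hm : 0 <= m) by (unfold m; apply Rlt_le, Rdiv_lt_0_compat; lra).
  assert (Hs : la + m = 1) by (unfold la, m; field; lra).
  apply Rabs_le.
  assert (0 <= la * (L*H^3 - X)) by (apply Rmult_le_pos; lra).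
  assert (0 <= la * (L*H^3 + X)) by (apply Rmult_le_pos; lra).
  assert (0 <= m * (L*H^3 - Y)) by (apply Rmult_le_pos; lra).
  assert (0 <= m * (L*H^3 + Y)) by (apply Rmult_le_pos; lra).
  nra.
Qed.

Lemma argmax (e : nat -> R) n : (1 <= n)%nat ->
  exists k, (1 <= k <= n)%nat /\ forall i, (1 <= i <= n)%nat -> Rabs (e i) <= Rabs (e k).
Proof.
  induction n as [|n IH]; intros Hn; [lia|].
  destruct n as [|n].
  - exists 1%nat. split; [lia|]. intros i Hi. replace i with 1%nat by lia. lra.
  - destruct (IH ltac:(lia)) as [k [Hk Hm]].
    destruct (Rle_lt_dec (Rabs (e (S (S n)))) (Rabs (e k))) as [Hl|Hl].
    + exists k. split; [lia|]. intros i Hi.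
      destruct (Nat.eq_dec i (S (S n))) as [->|Hne]; [lra|]. apply Hm; lia.
    + exists (S (S n)). split; [lia|]. intros i Hi.
      destruct (Nat.eq_dec i (S (S n))) as [->|Hne]; [lra|].
      pose proof (Hm i ltac:(lia)). lra.
Qed.

Lemma maxp n (e : nat -> R) (R0 : R) (la mu : nat -> R) : (1 <= n)%nat -> 0 <= R0 ->
  e 1%nat = 0 -> e n = 0 ->
  (forall i, (2 <= i <= n - 1)%nat -> 0 <= la i /\ 0 <= mu i /\ la i + mu i = 1 /\
     Rabs (la i * e (i - 1)%nat + 2 * e i + mu i * e (S i)) <= R0) ->
  forall i, (1 <= i <= n)%nat -> Rabs (e i) <= R0.
Proof.
  intros Hn HR H1 Hnn Hi.
  destruct (argmax e n Hn) as [k [Hk Hm]].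
  assert (Rabs (e k) <= R0).
  { destruct (Nat.eq_dec k 1) as [->|H1k]; [rewrite H1, Rabs_R0; lra|].
    destruct (Nat.eq_dec k n) as [->|Hnk]; [rewrite Hnn, Rabs_R0; lra|].
    destruct (Hi k ltac:(lia)) as [Hla [Hmu [Hs Hb]]].
    apply abs_inv in Hb.
    pose proof (Hm (k - 1)%nat ltac:(lia)) as A1.
    pose proof (Hm (S k) ltac:(lia)) as A2.
    apply abs_inv in A1. apply abs_inv in A2.
    set (M := Rabs (e k)) in *.
    assert (la k * e (k - 1)%nat <= la k * M) by (apply Rmult_le_compat_l; lra).
    assert (la k * (- M) <= la k * e (k - 1)%nat) by (apply Rmult_le_compat_l; lra).
    assert (mu k * e (S k) <= mu k * M) by (apply Rmult_le_compat_l; lra).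
    assert (mu k * (- M) <= mu k * e (S k)) by (apply Rmult_le_compat_l; lra).
    assert (la k * M + mu k * M = M) by (rewrite <- Rmult_plus_distr_r, Hs; ring).
    assert (EM : M = e k \/ M = - e k).
    { unfold M. destruct (Rcase_abs (e k)); [right; apply Rabs_left; lra| left; apply Rabs_pos_eq; lra]. }
    assert (la k * (- M) = - (la k * M)) by ring.
    assert (mu k * (- M) = - (mu k * M)) by ring.
    destruct EM; lra. }
  intros i Hi'. pose proof (Hm i Hi'). lra.
Qed.

Lemma hmax_ge x k i : (1 <= i <= k)%nat -> hstep x i <= hmax x k.
Proof.
  induction k as [|k IH]; intros Hi; [lia|]. simpl.
  destruct (Nat.eq_dec i (S k)) as [->|Hne]; [apply Rmax_r|].
  eapply Rle_trans; [apply IH; lia|apply Rmax_l].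
Qed.

Lemma mono x n : (forall i, (1 <= i <= n - 1)%nat -> x i < x (S i)) ->
  forall i j, (1 <= i <= j)%nat -> (j <= n)%nat -> x i <= x j.
Proof.
  intros Hinc i j Hij Hj. induction j as [|j IH]; [lia|].
  destruct (Nat.eq_dec i (S j)) as [->|Hne]; [lra|].
  pose proof (IH ltac:(lia) ltac:(lia)). pose proof (Hinc j ltac:(lia)). lra.
Qed.

Theorem proposition1 :
  forall (a b : R) (f : R -> R) (L K T p : R),
    a < b -> 0 < L -> 0 < K -> 0 < T -> 0 < p ->
    C4_on f a b ->
    (forall t, a <= t <= b -> Rabs (Derive_n f 4 t) <= L) ->
    exists C : R, 0 <= C /\
    forall (n : nat) (x : nat -> R),
      (2 <= n)%nat ->
      x 1%nat = a -> x n = b ->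
      (forall i, (1 <= i <= n - 1)%nat -> x i < x (S i)) ->
      (forall i, (1 <= i <= n - 1)%nat -> hhat x n / hstep x i <= K) ->
      forall (dd : nat -> R), spline_derivs f x n dd ->
      forall (i0 : nat) (ft : R), (1 < i0 < n)%nat ->
        Rabs (Derive f (x i0) - ft) = T * Rpower (hhat x n) p ->
        let F := fun i : nat => if Nat.eqb i i0 then ft else dd i in
        Rabs (F i0 - Derive f (x i0)) <= C * Rpower (hhat x n) p /\
        (forall i, (1 <= i <= n)%nat -> i <> i0 ->
           Rabs (F i - Derive f (x i)) <= C * hhat x n ^ 3) /\
        (forall P : R -> R, pw_hermite x n (fun i => f (x i)) F P ->
           forall t, x 1%nat < t < x n ->
             t <> x (i0 - 1)%nat -> t <> x i0 -> t <> x (S i0) ->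
             C2_at P t).
Proof.
  intros a b f L K T p Hab HL HK HT Hp HC4 HbL.
  exists (Rmax T L). split; [pose proof (Rmax_l T L); lra|].
  intros n x Hn Hx1 Hxn Hinc Hrat dd [Hd1 [Hdn Hsp]] i0 ft Hi0 Hft F.
  set (H := hhat x n) in *.
  assert (Hin : forall i, (1 <= i <= n)%nat -> a <= x i <= b).
  { intros i Hi. rewrite <- Hx1, <- Hxn. split; apply (mono x n Hinc); lia. }
  assert (HhH : forall i, (1 <= i <= n - 1)%nat -> hstep x i <= H).
  { intros i Hi. unfold H, hhat. apply hmax_ge. lia. }
  assert (Hh0 : forall i, (1 <= i <= n - 1)%nat -> 0 < hstep x i).
  { intros i Hi. unfold hstep. pose proof (Hinc i Hi). lra. }
  assert (H0 : 0 <= H) by (pose proof (HhH 1%nat ltac:(lia)); pose proof (Hh0 1%nat ltac:(lia)); lra).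
  assert (FE : forall i, i <> i0 -> F i = dd i).
  { intros i Hi. unfold F. rewrite (proj2 (Nat.eqb_neq i i0) Hi). reflexivity. }
  split; [|split].
  - unfold F. rewrite Nat.eqb_refl. rewrite Rabs_minus_sym, Hft.
    apply Rmult_le_compat_r; [unfold Rpower; left; apply exp_pos| apply Rmax_l].
  - intros i Hi Hne. rewrite FE by auto.
    assert (Hb : Rabs (dd i - Derive f (x i)) <= L * H ^ 3).
    { apply (maxp n (fun i => dd i - Derive f (x i)) (L * H ^ 3)
               (fun i => lam x (i - 1)) (fun i => mu x (i - 1))); try lia.
      - apply Rmult_le_pos; [lra|apply pow_le; lra].
      - simpl. rewrite Hd1. ring.
      - simpl. rewrite Hdn. ring.
      - intros j Hj. destruct j as [|k]; [lia|].
        replace (S k - 1)%nat with k by lia.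
        pose proof (Hh0 k ltac:(lia)) as Hk1. pose proof (Hh0 (S k) ltac:(lia)) as Hk2.
        split; [unfold lam; apply Rlt_le, Rdiv_lt_0_compat; lra|].
        split; [unfold mu; apply Rlt_le, Rdiv_lt_0_compat; lra|].
        split; [unfold lam, mu; field; lra|].
        pose proof (Hsp (S k) Hj) as Hs. replace (S k - 1)%nat with k in Hs by lia.
        match goal with |- Rabs ?E <= _ =>
          replace E with (3 * (lam x k * slope f x k + mu x k * slope f x (S k))
             - (lam x k * Derive f (x k) + 2 * Derive f (x (S k)) + mu x k * Derive f (x (S (S k)))))
          by (rewrite <- Hs; ring) end.
        unfold lam, mu, slope.
        pose proof (Hin k ltac:(lia)) as I0. pose proof (Hin (S k) ltac:(lia)) as I1.
        pose proof (Hin (S (S k)) ltac:(lia)) as I2.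
        pose proof (tay4 f a b L (x (S k)) (x (S (S k))) HC4 HbL I1 I2) as T1.
        pose proof (tay4 f a b L (x (S k)) (x k) HC4 HbL I1 I0) as T3.
        pose proof (tay3 f a b L (x (S k)) (x (S (S k))) HC4 HbL I1 I2) as T2.
        pose proof (tay3 f a b L (x (S k)) (x k) HC4 HbL I1 I0) as T4.
        replace (x k - x (S k)) with (- hstep x k) in T3, T4 by (unfold hstep; ring).
        apply (rbound L H (hstep x k) (hstep x (S k)) (f (x k)) (f (x (S k))) (f (x (S (S k))))
                 (Derive f (x k)) (Derive f (x (S k))) (Derive f (x (S (S k))))
                 (Derive_n f 1 (x (S k))) (Derive_n f 2 (x (S k))) (Derive_n f 3 (x (S k))));
          auto; try lra.
        + apply HhH; lia.
        + apply HhH; lia. }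
    eapply Rle_trans; [exact Hb|].
    apply Rmult_le_compat_r; [apply pow_le; lra|apply Rmax_r].
  - intros P Hpw t Ht Hn1 Hn2 Hn3.
    apply (C2_main f x n F P t Hn Hinc Hpw Ht).
    intros j Hj Htj. subst t.
    assert (j <> i0) by (intro; subst; auto).
    assert (S j <> i0) by (intro; subst; replace (S j - 1)%nat with j in Hn1 by lia; auto).
    assert (j - 1 <> i0)%nat by (intro; subst; replace (S (j - 1)) with j in Hn3 by lia; auto).
    rewrite !FE by auto. apply Hsp. exact Hj.
Qed.
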